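(* Let $b_n = \sum_{k=0}^n B_{n-k}^{(-k)}$ for $n\ge 0$. Then $b_0=1$ and for all $n\ge 0$, \[ 3b_{n+1} = 2b_n + \sum_{k=0}^n \binom{n+1}{k} b_k + 3. \]
   Context: For an integer $k$, $\mathrm{Li}_k(z)=\sum_{m\ge1} z^m/m^k$ (for $k\le 0$ this is a rational function of $z$). The poly-Bernoulli numbers $B_n^{(k)}\in\mathbb{Q}$ are defined by $\sum_{n\ge0} B_n^{(k)} \frac{t^n}{n!} = \frac{\mathrm{Li}_k(1-e^{-t})}{1-e^{-t}}$. *)

(* Defs.v *)
From mathcomp Require Import all_boot all_order all_algebra.
Set Implicit Arguments. Unset Strict Implicit. Unset Printing Implicit Defensive.
Import Order.TTheory GRing.Theory Num.Theory.
Local Open Scope ring_scope.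

(* A formal power series in t with rational coefficients: n |-> [t^n] f. *)
Definition fps := nat -> rat.

Definition fps_mul (f g : fps) : fps :=
  fun n => \sum_(i < n.+1) f i * g (n - i)%N.

Definition fps_one : fps := fun n => if n == 0%N then 1 else 0.

Fixpoint fps_pow (f : fps) (j : nat) : fps :=
  if j is j'.+1 then fps_mul f (fps_pow f j') else fps_one.

Definition one_minus_exp_neg : fps :=
  fun n => if n == 0%N then 0 else (-1) ^+ n.+1 / (n`!)%:R.

(* Li_k(z)/z = sum_{m>=1} z^(m-1) / m^k.  Substituting z = 1 - e^{-t}
   (which has zero constant term, so z^(m-1) = O(t^(m-1))), the coefficient
   of t^n only receives contributions from m = 1, ..., n+1. *)
Definition polyLi_quot_coef (k : int) (n : nat) : rat :=
  \sum_(1 <= m < n.+2) fps_pow one_minus_exp_neg m.-1 n / (m%:Q) ^ k.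

(* Poly-Bernoulli numbers: sum_n B_n^(k) t^n/n! = Li_k(1-e^-t)/(1-e^-t). *)
Definition polyBernoulli (n : nat) (k : int) : rat :=
  (n`!)%:R * polyLi_quot_coef k n.

Definition pbsum (n : nat) : rat :=
  \sum_(k < n.+1) polyBernoulli (n - k)%N (- (k%:Z)).

(* Main.v *)
Require Import Defs.
From mathcomp Require Import all_boot all_order all_algebra ring lra zify.
Import Order.TTheory GRing.Theory Num.Theory.
Local Open Scope ring_scope.

Definition u := one_minus_exp_neg.
Definition cc (m j : nat) : rat := (j`!)%:R * fps_pow u m j.
Definition ue (i : nat) : rat := if i == 0%N then 0 else (-1) ^+ i.+1.

Lemma cc0 j : cc 0 j = (j == 0%N)%:R.
Proof.
rewrite /cc /= /fps_one; case: j => [|j] /=; first by rewrite mul1r.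
by rewrite mulr0.
Qed.

Lemma fact_neq0 n : ((n`!)%:R : rat) != 0.
Proof. by rewrite pnatr_eq0 -lt0n fact_gt0. Qed.

Lemma cc_conv m j : cc m.+1 j = \sum_(i < j.+1) ('C(j, i))%:R * ue i * cc m (j - i).
Proof.
rewrite /cc /= /fps_mul mulr_sumr; apply: eq_bigr => -[i /= Hi] _.
have Hij : (i <= j)%N by [].
have E := bin_fact Hij.
have Ej : ((j`!)%:R : rat) = ('C(j, i))%:R * (i`!)%:R * ((j - i)`!)%:R.
  by rewrite -E natrM natrM mulrA.
rewrite Ej /u /one_minus_exp_neg /ue.
case: i {Hi Hij E Ej} => [|i] /=; first by rewrite !(mul0r, mulr0).
have h1 := fact_neq0 i.+1; have h2 := fact_neq0 (j - i.+1).
by field.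
Qed.

Lemma cc_low m j : (j < m)%N -> cc m j = 0.
Proof.
elim: m j => [//|m IH] j Hj.
rewrite cc_conv big1 // => -[i /= Hi] _.
case: (i =P 0%N) => [->|/eqP Hi0]; first by rewrite /ue /= mulr0 mul0r.
rewrite IH ?mulr0 //; lia.
Qed.

Lemma pascal_sum (f : nat -> rat) n :
  \sum_(k < n.+2) ('C(n.+1, k))%:R * f k =
  \sum_(k < n.+1) ('C(n, k))%:R * f k + \sum_(k < n.+1) ('C(n, k))%:R * f k.+1.
Proof.
rewrite big_ord_recl /=.
under eq_bigr => k _ do rewrite /bump /= binS natrD mulrDl.
rewrite big_split /= addrA; congr (_ + _).
rewrite [RHS]big_ord_recl big_ord_recr /= (@bin_small n n.+1) // mul0r addr0 !bin0.
by [].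
Qed.

Lemma ueS i : ue i.+1 = (-1) ^+ i.
Proof. by rewrite /ue /= !exprS !mulN1r opprK. Qed.

Lemma cdiff m j : cc m j - cc m.+1 j =
  \sum_(i < j.+1) ('C(j, i))%:R * (-1) ^+ i * cc m (j - i).
Proof.
rewrite cc_conv big_ord_recl [RHS]big_ord_recl /= !bin0 subn0 /ue /= mulr0 mul0r add0r.
rewrite expr0 !mul1r; congr (_ + _).
rewrite -sumrN; apply: eq_bigr => i _.
rewrite /bump /= !exprS; ring.
Qed.

Lemma cc_stir m j : cc m.+1 j.+1 = (m.+1)%:R * (cc m j - cc m.+1 j).
Proof.
elim: m j => [|m IH] j.
- rewrite cc_conv.
  under eq_bigr => i _ do rewrite -mulrA.
  rewrite (pascal_sum (fun i => ue i * cc 0 (j.+1 - i))).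
  rewrite big1 ?add0r; last first.
    move=> -[i /= Hi] _; rewrite subSn // cc0 /= mulr0 mulr0 //.
  rewrite cdiff mul1r; apply: eq_bigr => i _; rewrite ueS subSS mulrA //.
- rewrite cc_conv.
  under eq_bigr => i _ do rewrite -mulrA.
  rewrite (pascal_sum (fun i => ue i * cc m.+1 (j.+1 - i))).
  have -> : \sum_(i < j.+1) ('C(j, i))%:R * (ue i * cc m.+1 (j.+1 - i)) =
            (m.+1)%:R * (cc m.+1 j - cc m.+2 j).
    rewrite !cc_conv -sumrB mulr_sumr; apply: eq_bigr => -[i /= Hi] _.
    rewrite subSn // IH; ring.
  rewrite cdiff.
  have -> : \sum_(i < j.+1) ('C(j, i))%:R * (ue i.+1 * cc m.+1 (j.+1 - i.+1)) =
     \sum_(i < j.+1) ('C(j, i))%:R * (-1) ^+ i * cc m.+1 (j - i).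
    by apply: eq_bigr => i _; rewrite ueS subSS mulrA.
  rewrite -cdiff; ring.
Qed.

Definition aa (m j : nat) : rat := \sum_(k < j.+1) ((m.+1)%:R) ^+ k * cc m (j - k).

Lemma aa_rec m j : aa m j.+1 = (m.+1)%:R * aa m j + cc m j.+1.
Proof.
rewrite /aa big_ord_recl /= expr0 mul1r subn0 addrC mulr_sumr; congr (_ + _).
by apply: eq_bigr => i _; rewrite /bump /= subSS exprS mulrA.
Qed.

Lemma aa0 m : aa m 0 = cc m 0.
Proof. by rewrite /aa big_ord1 expr0 mul1r. Qed.

Lemma aa_low m j : (j < m)%N -> aa m j = 0.
Proof.
move=> H; rewrite /aa big1 // => i _; rewrite cc_low ?mulr0 //.
exact: leq_ltn_trans (leq_subr _ _) H.
Qed.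

Definition lin (b a : rat) : {poly rat} := b%:P + a%:P * 'X.

Lemma coef_lin b a (p : {poly rat}) i :
  (lin b a * p)`_i = b * p`_i + (if i is i'.+1 then a * p`_i' else 0).
Proof.
rewrite /lin mulrDl coefD coefCM -mulrA coefCM coefXM.
by case: i => [|i] //=; rewrite mulr0.
Qed.

Lemma lin0 b a : (lin b a).[0] = b.
Proof. by rewrite /lin hornerD hornerC hornerM hornerC hornerX mulr0 addr0. Qed.

Definition PP (m : nat) : {poly rat} := \prod_(i < m) lin 1 (i.+1)%:R.
Definition RR (m : nat) : {poly rat} := \prod_(i < m) lin 1 i%:R.

Lemma PPS m : PP m.+1 = PP m * lin 1 (m.+1)%:R.
Proof. by rewrite /PP big_ord_recr. Qed.

Lemma PP_RR m : PP m = RR m * lin 1 m%:R.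
Proof.
have E1 : RR m.+1 = RR m * lin 1 m%:R by rewrite /RR big_ord_recr.
have E2 : RR m.+1 = PP m.
  by rewrite /RR big_ord_recl /= /lin rmorph0 mul0r addr0 mul1r.
by rewrite -E2 E1.
Qed.

Lemma PP0 m : (PP m).[0] = 1.
Proof. rewrite /PP horner_prod big1 // => i _; exact: lin0. Qed.

Section Trunc.
Variable N : nat.

Definition eqm (p q : {poly rat}) := forall i, (i < N)%N -> p`_i = q`_i.
Local Notation "p =m q" := (eqm p q) (at level 70).

Lemma eqm_refl p : p =m p. Proof. by []. Qed.
Lemma eqm_eq {p q} : p = q -> p =m q. Proof. by move=> ->. Qed.
Lemma eqm_sym {p q} : p =m q -> q =m p. Proof. by move=> H i Hi; rewrite H. Qed.
Lemma eqm_trans {p q r} : p =m q -> q =m r -> p =m r.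
Proof. by move=> H1 H2 i Hi; rewrite H1 ?H2. Qed.
Lemma eqmD {p1 p2 q1 q2} : p1 =m q1 -> p2 =m q2 -> p1 + p2 =m q1 + q2.
Proof. by move=> H1 H2 i Hi; rewrite !coefD H1 ?H2. Qed.
Lemma eqmB {p1 p2 q1 q2} : p1 =m q1 -> p2 =m q2 -> p1 - p2 =m q1 - q2.
Proof. by move=> H1 H2 i Hi; rewrite !coefB H1 ?H2. Qed.
Lemma eqmM {p1 p2 q1 q2} : p1 =m q1 -> p2 =m q2 -> p1 * p2 =m q1 * q2.
Proof.
move=> H1 H2 i Hi; rewrite !coefM; apply: eq_bigr => -[j /= Hj] _.
rewrite H1 ?H2 //; lia.
Qed.
Lemma eqmMl r {p q} : p =m q -> r * p =m r * q.
Proof. by move=> H; apply: eqmM. Qed.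

Lemma eqm_sum (I : finType) (F G : I -> {poly rat}) :
  (forall i, F i =m G i) -> \sum_i F i =m \sum_i G i.
Proof.
move=> H i Hi; rewrite !coef_sum; apply: eq_bigr => j _; exact: H.
Qed.

Lemma eqm_cancel (K p q : {poly rat}) : K`_0 = 1 -> K * p =m K * q -> p =m q.
Proof.
move=> K0 H.
suff: forall n i, (i < n)%N -> (i < N)%N -> (p - q)`_i = 0.
  by move=> S i Hi; apply/eqP; rewrite -subr_eq0 -coefB (S i.+1).
elim=> [//|n IH] i Hin HiN.
have := H i HiN; move/eqP; rewrite -subr_eq0 -coefB -mulrBr coefM big_ord_recl /=.
rewrite K0 mul1r subn0 big1 ?addr0; first by move/eqP.
move=> [j /= Hj] _; rewrite IH ?mulr0 //; rewrite /bump /= add1n; lia.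
Qed.

Definition PA m : {poly rat} := \poly_(j < N) aa m j.
Definition PC m : {poly rat} := \poly_(j < N) cc m j.
Definition G : {poly rat} := \poly_(j < N) 1.

Lemma RA1 m : lin 1 (- (m.+1)%:R) * PA m =m PC m.
Proof.
move=> i Hi; rewrite coef_lin /PA /PC !coef_poly Hi mul1r.
case: i Hi => [|i] Hi /=; first by rewrite addr0 aa0.
rewrite coef_poly (ltnW Hi) aa_rec; ring.
Qed.

Lemma PC_step m : lin 1 (m.+1)%:R * PC m.+1 =m ((m.+1)%:R)%:P * ('X * PC m).
Proof.
move=> i Hi; rewrite coef_lin coefCM coefXM /PC !coef_poly Hi mul1r.
case: i Hi => [|i] Hi /=; first by rewrite addr0 mulr0 cc_low.
rewrite coef_poly (ltnW Hi) cc_stir; ring.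
Qed.

Lemma PC_rel m : PP m * PC m =m ((m`!)%:R)%:P * 'X^m.
Proof.
elim: m => [|m IH].
  move=> i Hi; rewrite /PP big_ord0 mul1r /PC coef_poly Hi cc0 expr0 mulr1 coefC.
  by case: i {Hi}.
rewrite PPS -mulrA.
refine (eqm_trans (eqmMl (PP m) (PC_step m)) _).
have -> : PP m * ((m.+1)%:R%:P * ('X * PC m)) = ((m.+1)%:R%:P * 'X) * (PP m * PC m).
  ring.
refine (eqm_trans (eqmMl _ IH) _).
rewrite factS natrM rmorphM /= exprS.
have -> : ((m.+1)%:R%:P * 'X) * ((m`!)%:R%:P * 'X^m) =
  ((m.+1)%:R)%:P * (m`!%:R)%:P * ('X * 'X^m) :> {poly rat} by ring.
exact: eqm_refl.
Qed.

Lemma RA m : PP m * (lin 1 (- (m.+1)%:R) * PA m) =m ((m`!)%:R)%:P * 'X^m.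
Proof. exact: eqm_trans (eqmMl _ (RA1 m)) (PC_rel m). Qed.


Definition Lop (g : {poly rat}) : {poly rat} :=
  \poly_(n < N) \sum_(k < n.+1) ('C(n, k))%:R * g`_k.

Lemma Lop_eqm {g h} : g =m h -> Lop g = Lop h.
Proof.
move=> H; apply/polyP => i; rewrite !coef_poly; case: ifP => // Hi.
apply: eq_bigr => -[k /= Hk] _; rewrite H //; lia.
Qed.

Lemma LopD g h : Lop (g + h) = Lop g + Lop h.
Proof.
apply/polyP => i; rewrite coefD !coef_poly; case: ifP => _; last by rewrite addr0.
rewrite -big_split; apply: eq_bigr => k _; by rewrite coefD mulrDr.
Qed.

Lemma LopZ c g : Lop (c%:P * g) = c%:P * Lop g.
Proof.
apply/polyP => i; rewrite coefCM !coef_poly; case: ifP => _; last by rewrite mulr0.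
rewrite mulr_sumr; apply: eq_bigr => k _; rewrite coefCM mulrCA //.
Qed.

Lemma LopX g : lin 1 (-1) * Lop ('X * g) =m 'X * Lop g.
Proof.
move=> i Hi; rewrite coef_lin coefXM mul1r /Lop !coef_poly Hi.
case: i Hi => [|i] Hi /=.
  by rewrite big_ord1 coefXM /= mulr0 addr0.
rewrite coef_poly (ltnW Hi) (pascal_sum (fun k => ('X * g)`_k)).
have -> : \sum_(k < i.+1) ('C(i, k))%:R * ('X * g)`_k.+1 = \sum_(k < i.+1) ('C(i, k))%:R * g`_k.
  by apply: eq_bigr => k _; rewrite coefXM.
ring.
Qed.

Lemma Lop_lin b a g : lin 1 (-1) * Lop (lin b a * g) =m lin b (a - b) * Lop g.
Proof.
have -> : lin b a * g = b%:P * g + a%:P * ('X * g) by rewrite /lin; ring.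
rewrite LopD !LopZ.
have -> : lin 1 (-1) * (b%:P * Lop g + a%:P * Lop ('X * g)) =
   b%:P * (lin 1 (-1) * Lop g) + a%:P * (lin 1 (-1) * Lop ('X * g)) by ring.
apply: eqm_trans (eqmD (eqm_refl _) (eqmMl _ (LopX g))) _.
have -> : lin b (a - b) * Lop g = b%:P * (lin 1 (-1) * Lop g) + a%:P * ('X * Lop g).
  rewrite /lin rmorphB rmorphN rmorph1 /=; ring.
exact: eqm_refl.
Qed.

Lemma Lop_Xn m h : lin 1 (-1) ^+ m * Lop ('X^m * h) =m 'X^m * Lop h.
Proof.
elim: m h => [|m IH] h; first by rewrite !expr0 !mul1r; exact: eqm_refl.
have -> : 'X^(m.+1) * h = 'X^m * ('X * h) by rewrite exprS; ring.
rewrite exprS -mulrA.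
refine (eqm_trans (eqmMl _ (IH _)) _).
have -> : lin 1 (-1) * ('X^m * Lop ('X * h)) = 'X^m * (lin 1 (-1) * Lop ('X * h)) by ring.
refine (eqm_trans (eqmMl _ (LopX h)) _).
rewrite exprS mulrA [_ * 'X]mulrC; exact: eqm_refl.
Qed.

Lemma Lop_P m g : lin 1 (-1) ^+ m * Lop (PP m * g) =m RR m * Lop g.
Proof.
elim: m g => [|m IH] g.
  by rewrite /PP /RR !big_ord0 expr0 !mul1r; exact: eqm_refl.
rewrite PPS -mulrA exprS -mulrA.
refine (eqm_trans (eqmMl _ (IH _)) _).
have -> : lin 1 (-1) * (RR m * Lop (lin 1 (m.+1)%:R * g)) =
  RR m * (lin 1 (-1) * Lop (lin 1 (m.+1)%:R * g)) by ring.
refine (eqm_trans (eqmMl _ (Lop_lin _ _ _)) _).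
have -> : ((m.+1)%:R - 1 : rat) = m%:R by rewrite -natr1 addrK.
rewrite /RR big_ord_recr /= -mulrA; exact: eqm_refl.
Qed.

Lemma Lop1 : Lop 1 = G.
Proof.
apply/polyP => i; rewrite /G !coef_poly; case: ifP => // _.
rewrite big_ord_recl /= bin0 coef1 /= mulr1 big1 ?addr0 // => k _.
by rewrite coef1 /= mulr0.
Qed.

Lemma GP : lin 1 (-1) * G =m 1.
Proof.
move=> i Hi; rewrite coef_lin /G coef1 !coef_poly Hi.
case: i Hi => [|i] Hi /=; first by rewrite mulr1 addr0.
rewrite coef_poly (ltnW Hi); ring.
Qed.

Lemma RU m : RR m * (lin 1 (- (m.+2)%:R) * Lop (PA m)) =m ((m`!)%:R)%:P * 'X^m.
Proof.
have H1 := Lop_eqm (RA m).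
have H2 : lin 1 (-1) ^+ m.+1 * Lop (PP m * (lin 1 (- (m.+1)%:R) * PA m)) =m
          RR m * (lin 1 (- (m.+2)%:R) * Lop (PA m)).
  rewrite exprS -mulrA.
  refine (eqm_trans (eqmMl _ (Lop_P _ _)) _).
  have -> : lin 1 (-1) * (RR m * Lop (lin 1 (- (m.+1)%:R) * PA m)) =
    RR m * (lin 1 (-1) * Lop (lin 1 (- (m.+1)%:R) * PA m)) by ring.
  refine (eqm_trans (eqmMl _ (Lop_lin _ _ _)) _).
  have -> : (- (m.+1)%:R - 1 : rat) = - (m.+2)%:R.
    by rewrite -[(m.+2)%:R]natr1 opprD.
  exact: eqm_refl.
have H3 : lin 1 (-1) ^+ m.+1 * Lop (((m`!)%:R)%:P * 'X^m) =m ((m`!)%:R)%:P * 'X^m.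
  rewrite -['X^m]mulr1 LopZ exprS.
  have -> : lin 1 (-1) * lin 1 (-1) ^+ m * ((m`!)%:R%:P * Lop ('X^m * 1)) =
     (m`!)%:R%:P * (lin 1 (-1) * (lin 1 (-1) ^+ m * Lop ('X^m * 1))) by ring.
  refine (eqm_trans (eqmMl _ (eqmMl _ (Lop_Xn _ _))) _).
  rewrite Lop1.
  have -> : lin 1 (-1) * ('X^m * G) = 'X^m * (lin 1 (-1) * G) by ring.
  refine (eqm_trans (eqmMl _ (eqmMl _ GP)) _).
  rewrite mulr1; exact: eqm_refl.
rewrite H1 in H2.
exact: eqm_trans (eqm_sym H2) H3.
Qed.


Definition FF m : {poly rat} := lin 3 (- (m.+3)%:R) * G * lin 1 m%:R * PA m.

Lemma Dm m : lin 4 (-2) * PA m - Lop (PA m) =m FF m - FF m.+1.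
Proof.
pose K := lin 1 (-1) * PP m * lin 1 (- (m.+1)%:R) * lin 1 (- (m.+2)%:R).
apply: (@eqm_cancel K).
  by rewrite -horner_coef0 /K !hornerM !lin0 PP0 !mul1r.
have E1 : K * (lin 4 (-2) * PA m - Lop (PA m)) =
  (lin 1 (-1) * lin 1 (- (m.+2)%:R) * lin 4 (-2)) * (PP m * (lin 1 (- (m.+1)%:R) * PA m))
  - (lin 1 (-1) * lin 1 m%:R * lin 1 (- (m.+1)%:R)) * (RR m * (lin 1 (- (m.+2)%:R) * Lop (PA m))).
  by rewrite /K !PP_RR; ring.
have E2 : K * (FF m - FF m.+1) =
  (lin 3 (- (m.+3)%:R) * lin 1 m%:R * lin 1 (- (m.+2)%:R)) * (lin 1 (-1) * G) *
     (PP m * (lin 1 (- (m.+1)%:R) * PA m))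
  - (lin 3 (- (m.+4)%:R) * lin 1 (- (m.+1)%:R)) * (lin 1 (-1) * G) *
     (PP m.+1 * (lin 1 (- (m.+2)%:R) * PA m.+1)).
  by rewrite /K /FF PPS; ring.
rewrite E1 E2.
refine (eqm_trans (eqmB (eqmMl _ (RA m)) (eqmMl _ (RU m))) _).
refine (eqm_trans _ (eqm_sym (eqmB (eqmM (eqmMl _ GP) (RA m)) (eqmM (eqmMl _ GP) (RA m.+1))))).
refine (eqm_eq _).
rewrite /lin factS natrM !rmorphN !rmorphM !rmorph_nat !rmorph1 /= exprS.
ring.
Qed.


Lemma total : \sum_(m < N) (lin 4 (-2) * PA m - Lop (PA m)) =m 3%:P * G.
Proof.
refine (eqm_trans (@eqm_sum _ _ _ (fun m : 'I_N => Dm m)) _).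
have tel : \sum_(m < N) (FF m - FF m.+1) = FF 0 - FF N.
  rewrite -(big_mkord xpredT (fun m => FF m - FF m.+1)).
  under eq_bigr do rewrite -opprB.
  by rewrite sumrN telescope_sumr // opprB.
rewrite tel.
have HN : PA N =m 0.
  move=> i Hi; rewrite /PA coef_poly Hi coef0 aa_low //.
have HFN : FF N =m 0.
  rewrite /FF; refine (eqm_trans (eqmMl _ HN) _); rewrite mulr0; exact: eqm_refl.
have HF0 : FF 0 =m 3%:P * G.
  have -> : FF 0 = 3%:P * G * (PP 0 * (lin 1 (- (0.+1)%:R) * PA 0)).
    rewrite /FF /PP big_ord0 /lin !rmorphN !rmorph_nat /= rmorph0; ring.
  refine (eqm_trans (eqmMl _ (RA 0)) _).
  rewrite /= expr0 mulr1 mulr1; exact: eqm_refl.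
refine (eqm_trans (eqmB HF0 HFN) _).
rewrite subr0; exact: eqm_refl.
Qed.

End Trunc.

Lemma pB i k : polyBernoulli i (- (k%:Z)) = \sum_(m < i.+1) ((m.+1)%:R) ^+ k * cc m i.
Proof.
rewrite /polyBernoulli /polyLi_quot_coef big_add1 /= big_mkord mulr_sumr.
apply: eq_bigr => m _.
change ((m.+1)%:Q) with ((m.+1)%:R : rat).
rewrite -exprnN invrK /cc /u; ring.
Qed.

Lemma pbsum_a j M : (j < M)%N -> pbsum j = \sum_(m < M) aa m j.
Proof.
move=> HM; rewrite /pbsum.
under eq_bigr => k _ do rewrite pB.
have E : forall k : 'I_j.+1, \sum_(m < (j - k).+1) ((m.+1)%:R) ^+ k * cc m (j - k) =
                           \sum_(m < M) ((m.+1)%:R) ^+ k * cc m (j - k).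
  move=> k; rewrite (big_ord_widen M (fun m => ((m.+1)%:R) ^+ k * cc m (j - k))); last lia.
  rewrite big_mkcond /=; apply: eq_bigr => m _; case: ifP => // /negbT H.
  rewrite cc_low ?mulr0 //; lia.
under eq_bigr => k _ do rewrite E.
rewrite exchange_big /=; apply: eq_bigr => m _; by [].
Qed.

Theorem proposition3p1 :
  pbsum 0 = 1 /\
  forall n : nat,
    3 * pbsum n.+1 = 2 * pbsum n + \sum_(k < n.+1) ('C(n.+1, k))%:R * pbsum k + 3.
Proof.
split.
  by rewrite (pbsum_a 0 1) // big_ord1 aa0 cc0.
move=> n.
have T := total n.+2 (n.+1) (ltnSn n.+1).
rewrite coef_sum coefCM /G coef_poly ltnSn mulr1 in T.
have T2 : \sum_(m < n.+2) (4 * aa m n.+1 - 2 * aa m n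
            - \sum_(k < n.+2) ('C(n.+1, k))%:R * aa m k) = 3.
  rewrite -T; apply: eq_big => // m _.
  rewrite coefB coef_lin /PA /Lop !coef_poly ltnSn leqnSn; congr (_ - _); first by rewrite mulNr.
  by apply: eq_bigr => k _; rewrite coef_poly ltn_ord.
rewrite !sumrB -!mulr_sumr in T2.
have X : \sum_(m < n.+2) \sum_(k < n.+2) ('C(n.+1, k))%:R * aa m k =
   \sum_(k < n.+1) ('C(n.+1, k))%:R * \sum_(m < n.+2) aa m k + \sum_(m < n.+2) aa m n.+1.
  rewrite exchange_big big_ord_recr /= binn; congr (_ + _).
    by apply: eq_bigr => k _; rewrite mulr_sumr.
  by apply: eq_bigr => k _; rewrite mulr1n mul1r.
rewrite X in T2.
rewrite (pbsum_a n.+1 n.+2) // (pbsum_a n n.+2) //.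
have -> : \sum_(k < n.+1) ('C(n.+1, k))%:R * pbsum k =
          \sum_(k < n.+1) ('C(n.+1, k))%:R * \sum_(m < n.+2) aa m k.
  apply: eq_bigr => k _; rewrite (pbsum_a k n.+2) //.
  by apply: leq_trans (ltn_ord k) _.
move: T2.
set B1 := \sum_(m < n.+2) aa m n.+1.
set B0 := \sum_(m < n.+2) aa m n.
set S := \sum_(k < n.+1) _.
move=> T2; lra.
Qed.
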